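(* Let $f$ be a probability density on $\mathbb{R}$ and let $\pi_0$ be the value of the problem $$\text{maximize }\int h\quad\text{over}\quad\{h:\mathbb{R}\to\mathbb{R}_+\text{ log-concave},\ h\le f\text{ a.e.}\}.$$ Let $\hat f_n$ be a density estimator computed from a sample of size $n$ from $f$, with each $\hat f_n$ a probability density, and assume $$\mathbb{E}\left[\operatorname{ess\,sup}_{|x|\le a}\frac{\max\{\hat f_n(x),f(x)\}}{\min\{\hat f_n(x),f(x)\}}\right]\to1\quad\text{as }n\to\infty,\ \text{for every } a>0.$$ Let $\hat\pi_0$ be the value of the same optimization problem with $f$ replaced by $\hat f_n$. Then $\hat\pi_0\to\pi_0$ in probability as $n\to\infty$.
   Context: A function $h:\mathbb{R}\to[0,\infty)$ is log-concave if $\log h:\mathbb{R}\to[-\infty,\infty)$ is concave (with $\log0=-\infty$). *)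

(* Defs.v *)
From HB Require Import structures.
From mathcomp Require Import all_boot all_order all_algebra.
From mathcomp Require Import all_classical all_reals all_analysis.
From mathcomp Require Import measurable_realfun.
Set Implicit Arguments. Unset Strict Implicit. Unset Printing Implicit Defensive.
Import Order.TTheory GRing.Theory Num.Theory.
Import numFieldNormedType.Exports.
Local Open Scope classical_set_scope.
Local Open Scope ring_scope.

Section defs.
Variable R : realType.
Local Notation leb := (@lebesgue_measure R).

Definition logE (h : R -> R) (x : R) : \bar R :=
  if 0 < h x then (ln (h x))%:E else -oo%E.

(* h : R -> [0,oo) is log-concave: log h : R -> [-oo,oo) is concave
   (with the usual convention 0 * -oo = 0) *)
Definition log_concave (h : R -> R) : Prop :=
  (forall x, 0 <= h x) /\
  forall (x y t : R), 0 <= t <= 1 ->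
    (t%:E * logE h x + (1 - t)%:E * logE h y <= logE h (t * x + (1 - t) * y))%E.

Definition prob_density (f : R -> R) : Prop :=
  measurable_fun setT f /\ (forall x, 0 <= f x) /\
  (\int[leb]_(x in setT) (f x)%:E = 1)%E.

Definition lc_value (f : R -> R) : \bar R :=
  ereal_sup [set (\int[leb]_(x in setT) (h x)%:E)%E | h in
     [set h | log_concave h /\ {ae leb, forall x, h x <= f x}]].

Definition maxmin_ratio (u v : R) : \bar R :=
  if 0 < Num.min u v then (Num.max u v / Num.min u v)%:E
  else if Num.max u v == 0 then 1%E else +oo%E.

Definition esssup_on (a : R) (g : R -> \bar R) : \bar R :=
  ereal_inf [set y | {ae leb, forall x, `|x| <= a -> (g x <= y)%E}].

End defs.

(* Main.v *)
Require Import Defs.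
From HB Require Import structures.
From mathcomp Require Import all_boot all_order all_algebra.
From mathcomp Require Import all_classical all_reals all_analysis.
From mathcomp Require Import measurable_realfun.
From mathcomp Require Import ring lra.
Import Order.TTheory GRing.Theory Num.Theory.
Import numFieldNormedType.Exports.
Local Open Scope classical_set_scope.
Local Open Scope ring_scope.

Set Implicit Arguments. Unset Strict Implicit.
Section helpers.
Variable R : realType.
Implicit Types h u v : R -> R.

Definition lcR h := forall x y t : R, 0 < t < 1 -> 0 < h x -> 0 < h y ->
  0 < h (t * x + (1 - t) * y) /\
  t * ln (h x) + (1 - t) * ln (h y) <= ln (h (t * x + (1 - t) * y)).

Lemma lc_lcR h : log_concave h -> lcR h.
Proof.
move=> [h0 hc] x y t /andP[t0 t1] hx hy.
have := hc x y t; rewrite (ltW t0) (ltW t1) => /(_ isT).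
rewrite /logE hx hy; case: ifPn => hz.
  by rewrite -!EFinM -EFinD lee_fin.
by rewrite leeNy_eq.
Qed.

Lemma lcR_lc h : (forall x, 0 <= h x) -> lcR h -> log_concave h.
Proof.
move=> h0 H; split => // x y t /andP[t0 t1].
have [->|tn0] := eqVneq t 0.
  by rewrite mul0r add0r subr0 mul1r mul0e add0e mul1e.
have [->|tn1] := eqVneq t 1.
  by rewrite subrr mul0r addr0 mul1r mul0e adde0 mul1e.
have t0' : 0 < t by rewrite lt_neqAle eq_sym tn0.
have t1' : t < 1 by rewrite lt_neqAle tn1.
have t1'' : 0 < 1 - t by rewrite subr_gt0.
rewrite /logE; case: (ltP 0 (h x)) => hx; last first.
  by rewrite muleC gt0_mulNye ?lte_fin // addNye leNye.
case: (ltP 0 (h y)) => hy; last first.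
  by rewrite [X in (_ + X)%E]muleC gt0_mulNye ?lte_fin // addeNy leNye.
have [hz hi] := H x y t (introT andP (conj t0' t1')) hx hy.
by rewrite hz -!EFinM -EFinD lee_fin.
Qed.

Lemma lc_qc h : log_concave h -> forall x y z, x <= z <= y ->
  Num.min (h x) (h y) <= h z.
Proof.
move=> hl x y z /andP[xz zy]; have h0 := hl.1.
have [->|zx] := eqVneq z x; first by rewrite ge_min lexx.
have [->|zy'] := eqVneq z y; first by rewrite ge_min lexx orbT.
have xz' : x < z by rewrite lt_neqAle xz eq_sym zx.
have zy'' : z < y by rewrite lt_neqAle zy zy'.
have yx : 0 < y - x by rewrite subr_gt0 (lt_trans xz' zy'').
pose t := (y - z) / (y - x).
have t0 : 0 < t by rewrite divr_gt0 // subr_gt0.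
have t1 : t < 1 by rewrite ltr_pdivrMr // mul1r ltrD2l ltrN2.
have ze : t * x + (1 - t) * y = z.
  rewrite /t; field; by rewrite gt_eqF.
case: (leP (h x) 0) => hx; first by rewrite ge_min (le_trans hx (h0 z)).
case: (leP (h y) 0) => hy; first by rewrite ge_min (le_trans hy (h0 z)) orbT.
have [hz hi] := @lc_lcR h hl x y t (introT andP (conj t0 t1)) hx hy.
rewrite ze in hz hi.
have posx : h x \is Num.pos by rewrite posrE.
have posy : h y \is Num.pos by rewrite posrE.
have posz : h z \is Num.pos by rewrite posrE.
case: (leP (h x) (h y)) => hxy.
  rewrite -(ler_ln posx posz).
  have : ln (h x) <= ln (h y) by rewrite ler_ln.
  move=> l; apply: le_trans hi.
  have : (1 - t) * ln (h x) <= (1 - t) * ln (h y).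
    by apply: ler_wpM2l; rewrite // subr_ge0 ltW.
  lra.
rewrite -(ler_ln posy posz).
have : ln (h y) <= ln (h x) by rewrite ler_ln // ltW.
move=> l; apply: le_trans hi.
have : t * ln (h y) <= t * ln (h x) by apply: ler_wpM2l; rewrite // ltW.
lra.
Qed.

Lemma lc_measurable h : log_concave h -> measurable_fun setT h.
Proof.
move=> hl; apply: (measurability _ (RGenOInfty.measurableE R)) => //.
move=> /= _ [_ [r ->] <-]; apply: measurableI => //.
apply: is_interval_measurable => u v /= hu hv z uzv.
move: hu hv; rewrite !in_itv /= !andbT => hu hv.
by apply: lt_le_trans (@lc_qc h hl _ _ _ uzv); rewrite lt_min hu hv.
Qed.

Lemma lc_trunc h (a c : R) : log_concave h -> 0 < c ->
  log_concave (fun x => if `|x| <= a then h x / c else 0).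
Proof.
move=> hl c0; have h0 := hl.1; apply: lcR_lc.
  by move=> x; case: ifP => // _; rewrite divr_ge0 // ltW.
move=> x y t /andP[t0 t1]; case: ifPn => ax; last by rewrite ltxx.
case: ifPn => ay; last by rewrite ltxx.
have cn0 : c != 0 by rewrite gt_eqF.
move=> hx hy.
have hx' : 0 < h x by rewrite -(divfK cn0 (h x)) mulr_gt0.
have hy' : 0 < h y by rewrite -(divfK cn0 (h y)) mulr_gt0.
have [hz hi] := @lc_lcR h hl x y t (introT andP (conj t0 t1)) hx' hy'.
have az : `|t * x + (1 - t) * y| <= a.
  apply: le_trans (ler_normD _ _) _.
  have t1' : 0 <= 1 - t by rewrite subr_ge0 ltW.
  rewrite !normrM (ger0_norm (ltW t0)) (ger0_norm t1').
  have : t * `|x| <= t * a by apply: ler_wpM2l; rewrite // ltW.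
  have : (1 - t) * `|y| <= (1 - t) * a by apply: ler_wpM2l; rewrite // subr_ge0 ltW.
  lra.
rewrite az; split; first by rewrite divr_gt0.
have pc : c^-1 \is Num.pos by rewrite posrE invr_gt0.
rewrite !lnM ?posrE // !lnV ?posrE //.
lra.
Qed.

Local Notation leb := (@lebesgue_measure R).

Lemma aeS (P Q : R -> Prop) : (forall x, P x -> Q x) ->
  {ae leb, forall x, P x} -> {ae leb, forall x, Q x}.
Proof.
move=> PQ [N [mN N0 sub]]; exists N; split => // x /= nQ.
by apply: sub => /= px; apply: nQ; apply: PQ.
Qed.

Lemma aeS2 (P Q S : R -> Prop) : (forall x, P x -> Q x -> S x) ->
  {ae leb, forall x, P x} -> {ae leb, forall x, Q x} -> {ae leb, forall x, S x}.
Proof.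
move=> PQ hP hQ; have := negligibleU hP hQ; move=> [N [mN N0 sub]].
exists N; split => // x /= nS; apply: sub.
case: (pselect (P x)) => px; last by left.
case: (pselect (Q x)) => qx; last by right.
by exfalso; apply: nS; apply: PQ.
Qed.

Definition Ka (a : R) : set R := `[- a, a]%classic.

Lemma Ka_meas a : measurable (Ka a).
Proof. exact: measurable_itv. Qed.

Lemma KaE a x : Ka a x <-> `|x| <= a.
Proof. by rewrite /Ka /= in_itv /= ler_norml. Qed.

Lemma lc_zero : log_concave (fun _ : R => 0).
Proof. by apply: lcR_lc => // x y t _; rewrite ltxx. Qed.

Lemma lc_value_ge0 u : (forall x, 0 <= u x) -> (0 <= lc_value u)%E.
Proof.
move=> u0; apply: le_ereal_sup_tmp; exists (\int[leb]_(x in setT) ((fun _ : R => 0) x)%:E)%E.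
  exists (fun _ => 0) => //; split; first exact: lc_zero.
  by apply: aeW => x.
by apply: integral_ge0 => x _; rewrite lee_fin.
Qed.

Lemma lc_value_le1 u : prob_density u -> (lc_value u <= 1)%E.
Proof.
move=> [mu [u0 iu]]; apply/ereal_supP => _ [h [hl hae] <-].
rewrite -iu; apply: ae_ge0_le_integral => //.
- by move=> x _; rewrite lee_fin hl.1.
- by apply/measurable_EFinP; exact: (@lc_measurable h hl).
- by move=> x _; rewrite lee_fin.
- by apply/measurable_EFinP.
- by apply: aeS hae => x hx _; rewrite lee_fin.
Qed.

Lemma lc_bound u v (a c : R) : prob_density u -> (forall x, 0 <= v x) -> 0 < c ->
  {ae leb, forall x, `|x| <= a -> u x <= c * v x} ->
  (lc_value u <= c%:E * lc_value v + \int[leb]_(x in ~` Ka a) (u x)%:E)%E.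
Proof.
move=> [mu [u0 iu]] v0 c0 huv; apply/ereal_supP => _ [h [hl hae] <-].
have h0 := hl.1; have mh := @lc_measurable h hl.
pose h' := fun x => if `|x| <= a then h x / c else 0.
have hl' : log_concave h' := @lc_trunc h a c hl c0.
have mh' := @lc_measurable _ hl'.
have cn0 : c != 0 by rewrite gt_eqF.
have Sh' : (\int[leb]_(x in setT) (h' x)%:E <= lc_value v)%E.
  apply: ereal_sup_ubound; exists h' => //; split => //.
  apply: aeS2 hae huv => x hu huv'; rewrite /h'; case: ifPn => ax //.
  by rewrite ler_pdivrMr // mulrC (le_trans hu (huv' ax)).
set K := Ka a.
have mK : measurable K by exact: Ka_meas.
have -> : (\int[leb]_(x in setT) (h x)%:E =
    \int[leb]_(x in K) (h x)%:E + \int[leb]_(x in ~` K) (h x)%:E)%E.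
  rewrite -ge0_integral_setU ?setUv //.
  - exact: measurableC.
  - by apply/measurable_EFinP.
  - by move=> x _; rewrite lee_fin.
  - by rewrite disj_set2E setICr.
apply: leeD.
  have -> : (\int[leb]_(x in K) (h x)%:E = \int[leb]_(x in K) (c%:E * (h' x)%:E))%E.
    apply: eq_integral => x; rewrite inE /K => /KaE ax.
    by rewrite /h' ax -EFinM mulrC divfK.
  rewrite ge0_integralZl_EFin //; last 3 first.
  - by move=> x _; rewrite lee_fin hl'.1.
  - by apply: measurableT_comp => //; apply: measurable_funS mh'.
  - exact: ltW.
  apply: lee_wpmul2l; first by rewrite lee_fin ltW.
  apply: le_trans Sh'; apply: ge0_subset_integral => //.
  - by apply/measurable_EFinP.
  - by move=> x _; rewrite lee_fin hl'.1.
apply: ae_ge0_le_integral => //.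
- exact: measurableC.
- by move=> x _; rewrite lee_fin.
- by apply/measurable_EFinP; apply: measurable_funS mh.
- by move=> x _; rewrite lee_fin.
- by apply/measurable_EFinP; apply: measurable_funS mu.
- by apply: aeS hae => x hx _; rewrite lee_fin.
Qed.

Lemma ereal_split (A B : \bar R) : (A + B = 1)%E -> (0 <= A)%E -> (0 <= B)%E ->
  exists k : R, [/\ A = k%:E, B = (1 - k)%:E & 0 <= k <= 1].
Proof.
case: A => [k| |]; case: B => [r| |] //=.
move=> /eqP; rewrite -EFinD eqe => /eqP S; rewrite !lee_fin => k0 r0.
exists k; split => //; first by rewrite -S addrC addKr.
by rewrite k0 /= -S lerDl.
Qed.

Lemma dens_split u a : prob_density u -> exists k : R,
  [/\ (\int[leb]_(x in Ka a) (u x)%:E = k%:E)%E,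
      (\int[leb]_(x in ~` Ka a) (u x)%:E = (1 - k)%:E)%E & 0 <= k <= 1].
Proof.
move=> [mu [u0 iu]].
apply: ereal_split.
- rewrite -iu -ge0_integral_setU ?setUv //.
  + exact: Ka_meas.
  + exact: measurableC (Ka_meas a).
  + by apply/measurable_EFinP.
  + by move=> x _; rewrite lee_fin.
  + by rewrite disj_set2E setICr.
- by apply: integral_ge0 => x _; rewrite lee_fin.
- by apply: integral_ge0 => x _; rewrite lee_fin.
Qed.

Lemma lc_fin u : prob_density u -> exists p : R, lc_value u = p%:E /\ 0 <= p <= 1.
Proof.
move=> pu; move: (lc_value_ge0 pu.2.1) (lc_value_le1 pu).
by case: (lc_value u) => [p| |] //=; rewrite !lee_fin => p0 p1; exists p; rewrite p0 p1.
Qed.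

Lemma det f g (a c eta : R) : prob_density f -> prob_density g -> 1 <= c ->
  {ae leb, forall x, `|x| <= a -> g x <= c * f x /\ f x <= c * g x} ->
  (\int[leb]_(x in ~` Ka a) (f x)%:E <= eta%:E)%E ->
  (`|lc_value g - lc_value f| <= ((c - 1) + (1 - (1 - eta) / c) + eta)%:E)%E.
Proof.
move=> pf pg c1 hae tf.
have c0 : 0 < c by apply: lt_le_trans c1.
have B1 := lc_bound pg pf.2.1 c0 (aeS (fun x (H : `|x| <= a -> g x <= c * f x /\ f x <= c * g x) ax => proj1 (H ax)) hae).
have B2 := lc_bound pf pg.2.1 c0 (aeS (fun x (H : `|x| <= a -> g x <= c * f x /\ f x <= c * g x) ax => proj2 (H ax)) hae).
have [kf [kfK kfC kf01]] := dens_split a pf.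
have [kg [kgK kgC kg01]] := dens_split a pg.
have kfg : kf <= c * kg.
  have : (\int[leb]_(x in Ka a) (f x)%:E <= c%:E * \int[leb]_(x in Ka a) (g x)%:E)%E.
    rewrite -ge0_integralZl_EFin; last 4 first.
    - exact: Ka_meas.
    - by move=> x _; rewrite lee_fin pg.2.1.
    - by apply/measurable_EFinP; apply: measurable_funS pg.1.
    - exact: ltW.
    apply: ae_ge0_le_integral.
    - exact: Ka_meas.
    - by move=> x _; rewrite lee_fin pf.2.1.
    - by apply/measurable_EFinP; apply: measurable_funS pf.1.
    - by move=> x _; rewrite -EFinM lee_fin mulr_ge0 // ?pg.2.1 // ltW.
    - apply/measurable_EFinP => /=.
      apply: measurable_funM => //; apply: measurable_funS pg.1 => //.
    - apply: aeS hae => x H /KaE ax; rewrite -EFinM lee_fin; exact: (H ax).2.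
  by rewrite kfK kgK -EFinM lee_fin.
have [p [pe p01]] := lc_fin pf.
have [q [qe q01]] := lc_fin pg.
rewrite pe qe kgC -EFinM -EFinD lee_fin in B1.
rewrite pe qe kfC -EFinM -EFinD lee_fin in B2.
rewrite kfC lee_fin in tf.
rewrite pe qe -EFinB abse_EFin lee_fin.
have w : (1 - eta) / c <= kg by rewrite ler_pdivrMr // mulrC; lra.
have c1' : 0 <= c - 1 by rewrite subr_ge0.
have hp : (c - 1) * p <= (c - 1) * 1 by apply: ler_wpM2l => //; case/andP: p01.
have hq : (c - 1) * q <= (c - 1) * 1 by apply: ler_wpM2l => //; case/andP: q01.
case/andP: p01 => p0 p1; case/andP: q01 => q0 q1.
case/andP: kf01 => ? ?; case/andP: kg01 => ? ?.
have e0 : 0 <= (1 - eta) / c -> True by [].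
rewrite ler_norml; apply/andP; split.
- have : 0 <= 1 - (1 - eta) / c - (1 - kg) + (1 - kg) by lra.
  lra.
- lra.
Qed.

Lemma tail_small f (eta : R) : prob_density f -> 0 < eta ->
  exists a : R, 0 < a /\ (\int[leb]_(x in ~` Ka a) (f x)%:E <= eta%:E)%E.
Proof.
move=> pf eta0; have [mf [f0 fi]] := pf.
apply: contrapT => Hn.
have Hn' : forall n : nat, (\int[leb]_(x in Ka n.+1%:R) (f x)%:E <= (1 - eta)%:E)%E.
  move=> n; have [k [kK kC k01]] := dens_split n.+1%:R pf.
  rewrite kK lee_fin; apply: contrapT => /negP; rewrite -ltNge => hk.
  apply: Hn; exists n.+1%:R; split; first by rewrite ltr0Sn.
  by rewrite kC lee_fin; apply: ltW; rewrite ltrBlDl -ltrBlDr.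
pose g' := fun n : nat => (EFin \o f) \_ (Ka n.+1%:R).
have mg' : forall n, measurable_fun setT (g' n).
  move=> n; rewrite /g'; apply/measurable_restrict => //; first exact: Ka_meas.
  by rewrite setTI; apply/measurable_EFinP; apply: measurable_funS mf => //; exact: Ka_meas.
have g'0 : forall n x, setT x -> (0 <= g' n x)%E.
  by move=> k y _; rewrite /g' /patch; case: ifP => // _; rewrite lee_fin.
have nd : forall x, setT x -> {homo g'^~ x : n m / (n <= m)%N >-> (n <= m)%E}.
  move=> y _ k l kl; rewrite /g' /patch; case: ifPn => xn.
    rewrite ifT //; move: xn; rewrite !inE => /KaE xn; apply/KaE.
    by apply: le_trans xn _; rewrite ler_nat.
  by case: ifP => // _; rewrite lee_fin.
have cv := cvg_monotone_convergence (mu := leb) measurableT mg' g'0 nd.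
have lim1 : (fun x => limn (g'^~ x)) = (EFin \o f).
  apply/funext => x; apply: lim_near_cst => //.
  exists (Num.truncn `|x|) => // n /= hn; rewrite /g' /patch ifT //.
  rewrite inE; apply/KaE; apply/ltW; apply: lt_le_trans (real_truncnS_gt (normr_real x)) _.
  by rewrite ler_nat ltnS.
rewrite lim1 /= fi in cv.
have : (limn (fun n => \int[leb]_(x in setT) g' n x) <= (1 - eta)%:E)%E.
  apply: lime_le; first by apply/cvg_ex; eexists; exact: cv.
  apply: nearW => n; rewrite -integral_mkcond; exact: Hn' n.
rewrite (cvg_lim _ cv) // lee_fin => h.
lra.
Qed.

Lemma ratio_ge1 (u v : R) : 0 <= u -> 0 <= v -> (1 <= maxmin_ratio u v)%E.
Proof.
move=> u0 v0; rewrite /maxmin_ratio; case: ifPn => m0.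
  by rewrite lee_fin ler_pdivlMr // mul1r ge_min le_max lexx.
by case: ifP => _; rewrite ?lexx ?leey.
Qed.

Lemma ratio_le (u v c : R) : 0 <= u -> 0 <= v -> (maxmin_ratio u v <= c%:E)%E ->
  u <= c * v /\ v <= c * u.
Proof.
move=> u0 v0; rewrite /maxmin_ratio; case: ifPn => m0.
  rewrite lee_fin => h.
  have c0 : 0 <= c.
    apply: le_trans h; apply: divr_ge0; last exact: ltW.
    by apply: le_trans u0 _; rewrite le_max lexx.
  move: h; rewrite ler_pdivrMr // => h.
  have mu : Num.min u v <= u by rewrite ge_min lexx.
  have mv : Num.min u v <= v by rewrite ge_min lexx orbT.
  have Mu : u <= Num.max u v by rewrite le_max lexx.
  have Mv : v <= Num.max u v by rewrite le_max lexx orbT.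
  have := ler_wpM2l c0 mu; have := ler_wpM2l c0 mv.
  rewrite mulrC in h; lra.
case: ifPn => [/eqP M0 _|_]; last by rewrite leye_eq.
have : u <= 0 by rewrite -M0 le_max lexx.
have : v <= 0 by rewrite -M0 le_max lexx orbT.
move=> v1 u1; have -> : u = 0 by apply/eqP; rewrite eq_le u1 u0.
have -> : v = 0 by apply/eqP; rewrite eq_le v1 v0.
by rewrite mulr0.
Qed.

Lemma leb_Ka (a : R) : 0 < a -> leb (Ka a) = (a + a)%:E.
Proof.
move=> a0; rewrite /Ka lebesgue_measure_itv /= ifT; last by rewrite lte_fin gtrN.
by rewrite -EFinD opprK.
Qed.

Lemma esssup_ge1 (a : R) (g : R -> \bar R) : 0 < a -> (forall x, (1 <= g x)%E) ->
  (1 <= esssup_on a g)%E.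
Proof.
move=> a0 g1; apply/ereal_infP => y [N [mN N0 sub]].
rewrite leNgt; apply/negP => y1.
have KN : Ka a `<=` N.
  move=> x /KaE ax; apply: sub => /= H.
  by have := lt_le_trans y1 (g1 x); rewrite ltNge (H ax).
have H1 := le_measure leb (mem_set (Ka_meas a)) (mem_set mN) KN.
have H2 : (leb N <= 0)%E by rewrite -[X in (_ <= X)%E]N0.
have := le_trans H1 H2.
move=> H; have : ((a + a)%:E <= 0)%E by rewrite -(leb_Ka a0); exact: H.
by rewrite lee_fin; lra.
Qed.

Lemma markov1 d (T : measurableType d) (P : probability T R) (r : T -> \bar R) (dl : R) :
  0 < dl -> measurable_fun setT r -> (forall w, (1 <= r w)%E) ->
  (1 + dl%:E * P (setT `&` [set w | ((1 + dl)%:E < r w)%E]) <= \int[P]_(w in setT) r w)%E.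
Proof.
move=> d0 mr r1; set A := setT `&` _.
have mA : measurable A by apply: emeasurable_fun_o_infty.
have r0 : forall w, (0 <= r w)%E by move=> w; apply: le_trans (r1 w).
have -> : (\int[P]_(w in setT) r w = \int[P]_(w in A) r w + \int[P]_(w in ~` A) r w)%E.
  rewrite -ge0_integral_setU ?setUv //.
  - exact: measurableC.
  - by rewrite disj_set2E setICr.
have h1 : ((1 + dl)%:E * P A <= \int[P]_(w in A) r w)%E.
  rewrite -(integral_cst P mA); apply: ge0_le_integral => //.
  - by move=> x _; rewrite /= lee_fin; lra.
  - exact: measurable_funS mr.
  - by move=> x [_ /= h]; apply: ltW.
have h2 : (1 * P (~` A) <= \int[P]_(w in ~` A) r w)%E.
  rewrite -(integral_cst P (measurableC mA)); apply: ge0_le_integral => //.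
  - exact: measurableC.
  - exact: measurable_funS mr.
rewrite probability_setC // mul1e in h2.
have : (0 <= P A)%E by apply: measure_ge0.
have : (P A <= 1)%E by apply: probability_le1.
move: h1 h2; case: (P A) => [p| |] //= h1 h2 p1 p0.
apply: le_trans (leeD h1 h2); rewrite -!EFinM -EFinB -!EFinD lee_fin; lra.
Qed.

End helpers.

Theorem mainTheorem8 (R : realType) (d : measure_display) (Omega : measurableType d)
  (P : probability Omega R) (f : R -> R) (fhat : nat -> Omega -> R -> R) :
  prob_density f ->
  (forall n w, prob_density (fhat n w)) ->
  (forall (a : R), 0 < a ->
     (forall n, measurable_fun [set: Omega]
        (fun w => esssup_on a (fun x => maxmin_ratio (fhat n w x) (f x)))) /\
     ((fun n => (\int[P]_(w in setT) esssup_on a (fun x => maxmin_ratio (fhat n w x) (f x)))%E)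
        @ \oo --> 1%E)) ->
  forall eps : R, 0 < eps ->
    exists A : nat -> set Omega,
      (forall n, measurable (A n)) /\
      (forall n, [set w | (eps%:E < `|lc_value (fhat n w) - lc_value f|)%E] `<=` A n) /\
      ((fun n => P (A n)) @ \oo --> 0%E).
Proof.
move=> pf pfh H eps eps0.
have eta0 : 0 < eps / 4 by rewrite divr_gt0.
have [a [a0 tf]] := tail_small pf eta0.
have [mr Iconv] := H a a0.
set dl := eps / 8.
have dl0 : 0 < dl by rewrite divr_gt0.
set c := 1 + eps / 4.
have c1 : 1 <= c by rewrite /c lerDl ltW.
set r := fun n w => esssup_on a (fun x => maxmin_ratio (fhat n w x) (f x)).
have r1 : forall n w, (1 <= r n w)%E.
  move=> n w; apply: esssup_ge1 => // x; apply: ratio_ge1.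
  - exact: (pfh n w).2.1.
  - exact: pf.2.1.
exists (fun n => setT `&` [set w | ((1 + dl)%:E < r n w)%E]).
split; [|split].
- by move=> n; apply: emeasurable_fun_o_infty => //; exact: mr.
- move=> n w /= Hw; split => //; rewrite ltNge; apply/negP => rle.
  have : (r n w < c%:E)%E by apply: le_lt_trans rle _; rewrite lte_fin /c /dl; lra.
  move=> /ereal_inf_lt [y /= Hy ylt].
  have hae : {ae (@lebesgue_measure R), forall x, `|x| <= a ->
      fhat n w x <= c * f x /\ f x <= c * fhat n w x}.
    apply: aeS Hy => x Hx ax; apply: ratio_le.
    - exact: (pfh n w).2.1.
    - exact: pf.2.1.
    - exact: le_trans (Hx ax) (ltW ylt).
  have := det pf (pfh n w) c1 hae tf.
  have B : (c - 1) + (1 - (1 - eps / 4) / c) + eps / 4 <= eps.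
    have c0 : 0 < c by apply: lt_le_trans c1.
    have : 1 - eps / 2 <= (1 - eps / 4) / c.
      rewrite ler_pdivlMr // /c; nra.
    rewrite /c; lra.
  move=> D.
  have B' : (((c - 1) + (1 - (1 - eps / 4) / c) + eps / 4)%:E <= eps%:E)%E by rewrite lee_fin.
  by have := lt_le_trans Hw (le_trans D B'); rewrite ltxx.
- set I := fun n => (\int[P]_(w in setT) r n w)%E.
  eapply (@squeeze_cvge _ _ _ _ (fun _ => 0%E) _ (fun n => (I n - 1) * (dl^-1)%:E)%E).
  + apply: nearW => n.
    set An := setT `&` _.
    have mA : measurable An by apply: emeasurable_fun_o_infty => //; exact: mr.
    have M := markov1 P dl0 (mr n) (r1 n).
    have p0 : (0 <= P An)%E by apply: measure_ge0.
    have p1 : (P An <= 1)%E by apply: probability_le1.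
    rewrite /I; move: M p0 p1.
    case: (P An) => [p| |] //; case: (\int[P]_(w in setT) r n w)%E => [q| |] //.
    * move=> M p0 p1; apply/andP; split => //.
      move: M; rewrite -EFinM -EFinD lee_fin => M.
      rewrite -EFinB -EFinM lee_fin ler_pdivlMr ?invr_gt0 //; lra.
    * move=> _ p0 p1; apply/andP; split => //.
      by rewrite gt0_mulye ?leey // lte_fin invr_gt0.
  + exact: cvg_cst.
  + have := cvgeZr (y := (dl^-1)%:E) isT (cvgeB _ Iconv (cvg_cst 1%E)).
    by rewrite subee // mul0e; apply.
Qed.
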